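(* Let $Z$ be a finite set, let $T_1,T_2$ be rooted $Z$-trees with $\mathrm{Seq}(T_1)=\mathrm{Seq}(T_2)$, and assume the subtree of $T_1$ rooted at the left child of its root has at least as many leaves as the subtree rooted at the right child. Let $Q_1,\dots,Q_k$ and $R_1,\dots,R_m$ be as defined in the context. Let $C\ge 4$ be a constant. Then at least one of the following holds: (i) there exist nodes $u\in T_1$, $v\in T_2$ and a leaf $x\in Z$ such that $x\notin \mathrm{Le}((T_1)_u)$, $x\notin\mathrm{Le}((T_2)_v)$ and $|\mathrm{Le}((T_1)_u)\cap \mathrm{Le}((T_2)_v)|\ge |Z|/C$; (ii) $|Q_j|\le \max(2|Z|/C,\,1)$ and $|R_l|\le\max(2|Z|/C,\,1)$ for all $1\le j\le k$, $1\le l\le m$.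
   Context: A rooted $Z$-tree is a binary rooted tree with a root of degree two (or a single node if $|Z|=1$), all other internal nodes of degree three, leaves bijectively labeled by $Z$, and each internal node having a designated left child and right child. For a node $v$, $T_v$ is the subtree rooted at $v$ and $\mathrm{Le}(\cdot)$ denotes the leaf set; the size $|T|$ of a tree is its number of leaves. $\mathrm{Seq}(T)$ is the left-to-right ordering of leaves given by the pre-order traversal of $T$ (visiting the left child before the right child). Let $P_1=(u_1,\dots,u_k)$ be the path in $T_1$ from its left-most leaf $u_1$ (first in $\mathrm{Seq}(T_1)$) to its root $u_k$; set $Q_1:=$ the one-leaf tree $u_1$ and, for $2\le j\le k$, $Q_j:=(T_1)_{c}$ where $c$ is the child of $u_j$ other than $u_{j-1}$. Let $P_2=(w_1,\dots,w_m)$ be the path in $T_2$ from its root $w_1$ to its right-most leaf $w_m$ (last in $\mathrm{Seq}(T_2)$); set $R_m:=$ the one-leaf tree $w_m$ and, for $1\le l<m$, $R_l:=(T_2)_{c}$ where $c$ is the child of $w_l$ other than $w_{l+1}$. *)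

(* Defs.v *)
From HB Require Import structures.
From mathcomp Require Import all_boot all_order all_algebra.
Set Implicit Arguments. Unset Strict Implicit. Unset Printing Implicit Defensive.

(* Rooted binary trees with ordered children (left, right) and leaves
   labelled by elements of A.  A rooted Z-tree is such a tree whose leaf
   sequence is duplicate-free, Z being its set of leaves. *)
Inductive tree (A : Type) : Type :=
| Leaf of A
| Node of tree A & tree A.
Arguments Leaf {A}.
Arguments Node {A}.

Section Trees.
Variable A : Type.

Fixpoint leaves (t : tree A) : seq A :=
  match t with
  | Leaf x => [:: x]
  | Node l r => leaves l ++ leaves r
  end.

(* All subtrees T_v, one per node v of T (including the root and the leaves). *)
Fixpoint subtrees (t : tree A) : seq (tree A) :=
  match t with
  | Leaf x => [:: t]
  | Node l r => t :: (subtrees l ++ subtrees r)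
  end.

(* Q_1, ..., Q_k : Q_1 is the left-most leaf, Q_j (j >= 2) is the subtree
   rooted at the child of u_j other than u_{j-1} along the path from the
   left-most leaf to the root. *)
Fixpoint Qseq (t : tree A) : seq (tree A) :=
  match t with
  | Leaf x => [:: t]
  | Node l r => Qseq l ++ [:: r]
  end.

(* R_1, ..., R_m : along the path from the root to the right-most leaf,
   R_l (l < m) is the subtree at the child of w_l other than w_{l+1},
   and R_m is the right-most leaf. *)
Fixpoint Rseq (t : tree A) : seq (tree A) :=
  match t with
  | Leaf x => [:: t]
  | Node l r => l :: Rseq r
  end.

Definition nleaves (t : tree A) : nat := size (leaves t).

(* the left subtree of the root has at least as many leaves as the right one
   (vacuous when the tree is a single leaf, i.e. |Z| = 1) *)
Definition left_heavy (t : tree A) : Prop :=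
  match t with
  | Leaf _ => True
  | Node l r => nleaves r <= nleaves l
  end.
End Trees.

(* Main.v *)
Require Import Defs.
From Stdlib Require List.
From Stdlib Require Import Classical.
From HB Require Import structures.
From mathcomp Require Import all_boot all_order all_algebra.
From mathcomp Require Import lra.
Import Order.TTheory GRing.Theory Num.Theory.
Local Open Scope ring_scope.

Set Implicit Arguments. Unset Strict Implicit.
Section Aux.
Context {A : eqType}.

Lemma In_cat (T : Type) (x : T) (s1 s2 : seq T) :
  List.In x (s1 ++ s2) -> List.In x s1 \/ List.In x s2.
Proof.
elim: s1 => [|y s IH] /=; first by right.
case=> [->|H]; first by left; left.
by case: (IH H) => [h|h]; [left; right|right].
Qed.

Lemma In_catl (T : Type) (x : T) (s1 s2 : seq T) :
  List.In x s1 -> List.In x (s1 ++ s2).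
Proof. elim: s1 => [|y s IH] //= [->|H]; [by left| by right; apply: IH]. Qed.

Lemma In_catr (T : Type) (x : T) (s1 s2 : seq T) :
  List.In x s2 -> List.In x (s1 ++ s2).
Proof. elim: s1 => [|y s IH] //= H; by right; apply: IH. Qed.


Arguments In_cat {T x s1 s2}.
Arguments In_catl {T x s1 s2}.
Arguments In_catr {T x s1 s2}.

Lemma leaves_cons (t : tree A) : exists a r, leaves t = a :: r.
Proof.
elim: t => [x|l [a [r El]] rt _]; first by exists x, [::].
by exists a, (r ++ leaves rt); rewrite /= El.
Qed.

Lemma leaves_rcons (t : tree A) : exists r z, leaves t = rcons r z.
Proof.
elim: t => [x|l _ rt [r [z Er]]]; first by exists [::], x.
by exists (leaves l ++ r), z; rewrite /= Er rcons_cat.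
Qed.

Lemma sub_subseq (t Q : tree A) :
  List.In Q (subtrees t) -> subseq (leaves Q) (leaves t).
Proof.
elim: t => [x|l IHl rt IHr].
  by case=> [<-|[]]; rewrite /= eqxx.
move=> /= [<-|H]; first exact: subseq_refl.
case: (In_cat H) => [h|h].
  exact: subseq_trans (IHl h) (prefix_subseq _ _).
exact: subseq_trans (IHr h) (suffix_subseq _ _).
Qed.

Lemma self_sub (t : tree A) : List.In t (subtrees t).
Proof. by case: t => [x|l r] /=; left. Qed.

Lemma Q_sub (t Q : tree A) : List.In Q (Qseq t) -> List.In Q (subtrees t).
Proof.
elim: t => [x|l IHl rt IHr] /=; first by [].
move=> H; right; case: (In_cat H) => [h|[<-|[]]].
  by apply: In_catl; apply: IHl.
by apply: In_catr; apply: self_sub.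
Qed.

Lemma R_sub (t Q : tree A) : List.In Q (Rseq t) -> List.In Q (subtrees t).
Proof.
elim: t => [x|l IHl rt IHr] /=; first by [].
case=> [<-|h]; right.
  by apply: In_catl; apply: self_sub.
by apply: In_catr; apply: IHr.
Qed.

Lemma Qhead (t Q : tree A) a r : uniq (leaves t) -> leaves t = a :: r ->
  List.In Q (Qseq t) -> (1 < nleaves Q)%N -> a \notin leaves Q.
Proof.
elim: t a r Q => [x|l IHl rt IHr] a r Q U E /=.
  by case=> [<-|[]].
have [a' [r' El]] := leaves_cons l.
move: (E); rewrite /= El /= => -[Ea _]; subst a'.
move: U; rewrite /= cat_uniq => /and3P[Ul D _] HQ N.
case: (In_cat HQ) => [h|[<-|[]]].
  exact: IHl Ul El h N.
apply/negP => H; move/hasPn: D => /(_ a H); by rewrite El mem_head.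
Qed.

Lemma Rlast (t Q : tree A) r z : uniq (leaves t) -> leaves t = rcons r z ->
  List.In Q (Rseq t) -> (1 < nleaves Q)%N -> z \notin leaves Q.
Proof.
elim: t r z Q => [x|l IHl rt IHr] r z Q U E /=.
  by case=> [<-|[]].
have [r' [z' Er]] := leaves_rcons rt.
move: (E); rewrite /= Er -rcons_cat => /(congr1 (last z)); rewrite !last_rcons => Ez.
subst z'.
move: U; rewrite /= cat_uniq => /and3P[_ D Ur] HQ N.
case: HQ => [<-|h]; last exact: IHr Ur Er h N.
apply/negP => H; move/hasPn: D => /(_ z); rewrite Er mem_rcons mem_head.
by move=> /(_ isT); rewrite H.
Qed.

Lemma split_count (lL lR lu : seq A) :
  uniq (lL ++ lR) -> {subset lu <= lL ++ lR} ->
  (size [seq y <- lu | y \in lL] + size [seq y <- lu | y \in lR] = size lu)%N.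
Proof.
move=> U S; rewrite !size_filter -(count_predC (fun y => y \in lL) lu).
congr (_ + _)%N; apply: eq_in_count => y /S.
move: U; rewrite cat_uniq => /and3P[_ D _].
rewrite mem_cat /= => /orP[h|h].
  rewrite h /=; apply/negP => h2; move/hasPn: D => /(_ y h2); by rewrite h.
rewrite h /=; symmetry; apply/negP => h2.
by move/hasPn: D => /(_ y h); rewrite h2.
Qed.

Lemma count_sub (s l : seq A) : uniq s -> uniq l -> {subset l <= s} ->
  size [seq y <- s | y \in l] = size l.
Proof.
move=> Us Ul S; apply/perm_size/uniq_perm; [exact: filter_uniq|done|].
move=> y; rewrite mem_filter; case H: (y \in l) => //=; exact: S.
Qed.

End Aux.
Arguments In_cat {T x s1 s2}.
Arguments In_catl {T x s1 s2}.
Arguments In_catr {T x s1 s2}.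
Unset Implicit Arguments. Set Strict Implicit.

Lemma In_subL (A : eqType) (l r : tree A) : List.In l (subtrees (Node l r)).
Proof. by right; apply: In_catl; apply: self_sub. Qed.
Lemma In_subR (A : eqType) (l r : tree A) : List.In r (subtrees (Node l r)).
Proof. by right; apply: In_catr; apply: self_sub. Qed.

Theorem lemma1 (R : realFieldType) (A : eqType) (T1 T2 : tree A) (C : R) :
  uniq (leaves T1) ->
  leaves T1 = leaves T2 ->
  left_heavy T1 ->
  4 <= C ->
  (exists u v x,
      [/\ List.In u (subtrees T1), List.In v (subtrees T2), x \in leaves T1,
          x \notin leaves u & x \notin leaves v] /\
          (size (leaves T1))%:R / C <=
            (size [seq y <- leaves u | y \in leaves v])%:R)
  \/
  ((forall Q, List.In Q (Qseq T1) ->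
      (nleaves Q)%:R <= Num.max (2 * (size (leaves T1))%:R / C) 1) /\
   (forall Rt, List.In Rt (Rseq T2) ->
      (nleaves Rt)%:R <= Num.max (2 * (size (leaves T1))%:R / C) 1)).
Proof.
move=> U E LH C4.
have C0 : 0 < C by lra.
case: T1 U E LH => [x|L1 R1] U E LH.
  right.
  have H2 : forall t : tree A, (nleaves t <= 1)%N ->
     (nleaves t)%:R <= Num.max (2 * (size (leaves (Leaf x)))%:R / C) 1.
    by move=> t h; rewrite le_max lern1 h orbT.
  split.
    by move=> Q /= [<-|[]]; apply: H2.
  move=> Rt /R_sub /sub_subseq /size_subseq; rewrite -E => h; exact: H2.
case: T2 E => [y|L2 R2] E.
  exfalso; have [a [r Ea]] := leaves_cons L1; have [b [r' Eb]] := leaves_cons R1.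
  by move: E; rewrite /= Ea Eb /= => -[_ /(congr1 size)]; rewrite size_cat /= addnS.
move: E => /= E.
have U2 : uniq (leaves L2 ++ leaves R2) by rewrite -E.
have D1' : forall y, y \in leaves R1 -> y \notin leaves L1.
  by move: (U); rewrite /= cat_uniq => /and3P[_ /hasPn D _].
have D2' : forall y, y \in leaves R2 -> y \notin leaves L2.
  by move: (U2); rewrite cat_uniq => /and3P[_ /hasPn D _].
have [a [r0 Ea]] := leaves_cons L1.
have [a2 [r2 Ea2]] := leaves_cons L2.
have aL1 : a \in leaves L1 by rewrite Ea mem_head.
have aL2 : a \in leaves L2.
  by move: (E); rewrite /= Ea Ea2 /= => -[-> _]; rewrite mem_head.
have Ehead : leaves (Node L1 R1) = a :: (r0 ++ leaves R1) by rewrite /= Ea.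
have [q1 [z Ez]] := leaves_rcons R1.
have [q2 [z2 Ez2]] := leaves_rcons R2.
have zz : z2 = z.
  by move: (E); rewrite /= Ez Ez2 -!rcons_cat => /(congr1 (last z)); rewrite !last_rcons.
subst z2.
have zR1 : z \in leaves R1 by rewrite Ez mem_rcons mem_head.
have zR2 : z \in leaves R2 by rewrite Ez2 mem_rcons mem_head.
have Elast : leaves (Node L2 R2) = rcons (leaves L2 ++ q2) z by rewrite /= Ez2 rcons_cat.
set n := size (leaves (Node L1 R1)).
set d := n%:R / C.
have dC : d * C = n%:R by rewrite /d divfK // gt_eqF.
have npos : (0 < n)%N by rewrite /n Ehead.
have d0 : 0 < d by apply: divr_gt0; rewrite ?ltr0n.
have pn : (n%:R : R) <= 2 * (nleaves L1)%:R.
  have : ((nleaves R1)%:R : R) <= (nleaves L1)%:R by rewrite ler_nat.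
  rewrite /n /= size_cat natrD /nleaves; lra.
have key : 4 * d <= n%:R by nra.
have e2 : 2 * n%:R / C = 2 * d by rewrite /d mulrA.
rewrite e2.
match goal with |- ?P \/ _ => case: (classic P) => [H|NI]; [by left|right] end.
have TL1 : forall y, y \in leaves L1 -> y \in leaves (Node L1 R1).
  by move=> y h; rewrite /= mem_cat h.
have TR1 : forall y, y \in leaves R1 -> y \in leaves (Node L1 R1).
  by move=> y h; rewrite /= mem_cat h orbT.
have hA : (size [seq y <- leaves L1 | y \in leaves L2])%:R < d.
  rewrite ltNge; apply/negP => h; apply: NI; exists L1, L2, z; split => //.
  split; [exact: In_subL|exact: In_subL|exact: TR1|exact: D1'|exact: D2'].
have hB : ~~ has (fun y => y \in leaves L2) (leaves R1).
  apply/hasP => -[x xR1 xL2]; apply: NI; exists L1, R2, x; split.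
    split; [exact: In_subL|exact: In_subR|exact: TR1|exact: D1'|].
    by apply/negP => h; move: (D2' x h); rewrite xL2.
  have sub1 : {subset leaves L1 <= leaves L2 ++ leaves R2}.
    by move=> y h; rewrite -E mem_cat h.
  move: (split_count U2 sub1) => /(congr1 (fun k : nat => k%:R : R)); rewrite natrD => hs.
  move: hs hA pn key; rewrite /nleaves; lra.
have hB0 : size [seq y <- leaves R1 | y \in leaves L2] = 0%N.
  by rewrite size_filter; apply/eqP; rewrite -leqn0 leqNgt -has_count (negbTE hB).
split.
  move=> Q HQ; rewrite leNgt; apply/negP; rewrite gt_max => /andP[h2 h1].
  rewrite ltr1n in h1.
  have aQ : a \notin leaves Q := Qhead U Ehead HQ h1.
  have HQs := Q_sub (t := Node L1 R1) HQ.
  have sQ := sub_subseq HQs.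
  have sub : {subset leaves Q <= leaves L2 ++ leaves R2}.
    by move=> y h; rewrite -E; exact: (mem_subseq sQ h).
  move: (split_count U2 sub) => /(congr1 (fun k : nat => k%:R : R)); rewrite natrD => sp.
  have [h|h] := leP d (size [seq y <- leaves Q | y \in leaves R2])%:R.
    apply: NI; exists Q, R2, a; split => //; split => //; first exact: In_subR.
      exact: TL1.
    by apply/negP => h'; move: (D2' a h'); rewrite aL2.
  have hL : d <= (size [seq y <- leaves Q | y \in leaves L2])%:R.
    move: sp h2 h; rewrite /nleaves; lra.
  move: HQ => /= /In_cat [HQ|[EQ|[]]].
    have sQ1 := sub_subseq (Q_sub HQ).
    apply: NI; exists Q, L2, z; split => //; split => //; first exact: In_subL.
      exact: TR1.
    by apply/negP => h'; have := D1' z zR1; rewrite (mem_subseq sQ1 h').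
    by apply: D2'.
  by subst Q; rewrite hB0 in hL; lra.
move=> Rt HR; rewrite leNgt; apply/negP; rewrite gt_max => /andP[h2 h1].
rewrite ltr1n in h1.
have zR : z \notin leaves Rt := Rlast (t := Node L2 R2) U2 Elast HR h1.
have HRs := R_sub (t := Node L2 R2) HR.
have sR := sub_subseq HRs.
have sub : {subset leaves Rt <= leaves L1 ++ leaves R1}.
  by move=> y h; rewrite E; exact: (mem_subseq sR h).
have := count_sub U (subseq_uniq sR U2) sub.
rewrite filter_cat size_cat => /(congr1 (fun k : nat => k%:R : R)); rewrite natrD => sp.
have [h|h] := leP d (size [seq y <- leaves L1 | y \in leaves Rt])%:R.
  apply: NI; exists L1, Rt, z; split => //; split => //; first exact: In_subL.
    exact: TR1.
  exact: D1'.
have hL : d <= (size [seq y <- leaves R1 | y \in leaves Rt])%:R.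
  move: sp h2 h; rewrite /nleaves; lra.
move: HR => /= [EQ|HR'].
  by subst Rt; rewrite hB0 in hL; lra.
have sR2 := sub_subseq (R_sub HR').
apply: NI; exists R1, Rt, a; split => //; split => //; first exact: In_subR.
    exact: TL1.
  by apply/negP => h'; move: (D1' a h'); rewrite aL1.
by apply/negP => h'; have := D2' a (mem_subseq sR2 h'); rewrite aL2.
Qed.
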